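(* If $\lambda,\mu\in\Xi$ are circuits in $\Lambda$ and $V_0\cap F_\lambda\cap F_\mu\neq\emptyset$, then $\lambda$ and $\mu$ are consistent, i.e. $\lambda_e\mu_e\ge0$ for all $e\in E$.
   Context: Let $\mathcal M$ be a regular matroid on a finite ground set $E$, represented by a totally unimodular matrix $M$; $\mathcal F=\ker M\subseteq\mathbb R^E$ with Euclidean inner product, $\Lambda=\ker M\cap\mathbb Z^E$, $V_0=\{x\in\mathcal F:\|x\|\le\|x-\mu\|\ \forall\mu\in\Lambda\}$. A nonzero flow is Eulerian if all coordinates lie in $\{-1,0,1\}$; a circuit in $\Lambda$ is an Eulerian flow whose support is a circuit (minimal dependent set of columns) of $\mathcal M$; $\Xi$ is the set of circuits in $\Lambda$. For $\gamma\in\Xi$, $F_\gamma=\{x\in\mathcal F:2\langle x,\gamma\rangle=\|\gamma\|^2\}$. *)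

(* Defs.v *)
From HB Require Import structures.
From mathcomp Require Import all_boot all_order all_algebra.
From mathcomp Require Import reals.
Set Implicit Arguments. Unset Strict Implicit. Unset Printing Implicit Defensive.
Import Order.TTheory GRing.Theory Num.Theory.
Local Open Scope ring_scope.

(* Ground set E = 'I_n; the matroid is represented by M : 'M[int]_(m, n). *)

(* Total unimodularity: every square submatrix has determinant in {-1,0,1}.
   (Submatrices are given by arbitrary row/column selections; non-injective
   selections give determinant 0, reorderings only change the sign.) *)
Definition totally_unimodular (m n : nat) (M : 'M[int]_(m, n)) : Prop :=
  forall (k : nat) (f : 'I_k -> 'I_m) (g : 'I_k -> 'I_n),
    \det (mxsub f g M) \in [:: -1; 0; 1].

Definition realM (R : realType) (m n : nat) (M : 'M[int]_(m, n)) : 'M[R]_(m, n) :=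
  map_mx (fun z : int => z%:~R) M.

Definition inF (R : realType) (m n : nat) (M : 'M[int]_(m, n)) (x : 'cV[R]_n) : Prop :=
  realM R M *m x = 0.

Definition inLambda (m n : nat) (M : 'M[int]_(m, n)) (z : 'cV[int]_n) : Prop :=
  M *m z = 0.

Definition toR (R : realType) (n : nat) (z : 'cV[int]_n) : 'cV[R]_n :=
  map_mx (fun a : int => a%:~R) z.

Definition dotR (R : realType) (n : nat) (x y : 'cV[R]_n) : R :=
  \sum_(i < n) x i 0 * y i 0.
Definition normR (R : realType) (n : nat) (x : 'cV[R]_n) : R :=
  Num.sqrt (dotR x x).

Definition inV0 (R : realType) (m n : nat) (M : 'M[int]_(m, n)) (x : 'cV[R]_n) : Prop :=
  inF M x /\ forall mu : 'cV[int]_n, inLambda M mu -> normR x <= normR (x - toR R mu).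

Definition dependent (R : realType) (m n : nat) (M : 'M[int]_(m, n)) (S : {set 'I_n}) : Prop :=
  exists c : 'cV[R]_n, c != 0 /\ (forall i, i \notin S -> c i 0 = 0) /\ realM R M *m c = 0.

Definition matroid_circuit (R : realType) (m n : nat) (M : 'M[int]_(m, n)) (S : {set 'I_n}) : Prop :=
  dependent R M S /\ forall T : {set 'I_n}, T \proper S -> ~ dependent R M T.

Definition support (n : nat) (z : 'cV[int]_n) : {set 'I_n} := [set i | z i 0 != 0].

Definition eulerian (m n : nat) (M : 'M[int]_(m, n)) (z : 'cV[int]_n) : Prop :=
  inLambda M z /\ z != 0 /\ forall i, z i 0 \in [:: -1; 0; 1].

Definition inXi (R : realType) (m n : nat) (M : 'M[int]_(m, n)) (z : 'cV[int]_n) : Prop :=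
  eulerian M z /\ matroid_circuit R M (support z).

Definition inFgamma (R : realType) (m n : nat) (M : 'M[int]_(m, n)) (g : 'cV[int]_n)
  (x : 'cV[R]_n) : Prop :=
  inF M x /\ 2 * dotR x (toR R g) = normR (toR R g) ^+ 2.

(* Main.v *)
Require Import Defs.
From HB Require Import structures.
From mathcomp Require Import all_boot all_order all_algebra.
From mathcomp Require Import reals.
From mathcomp Require Import ring lra zify.
From Stdlib Require Import Classical.
Import Order.TTheory GRing.Theory Num.Theory.
Local Open Scope ring_scope.
Lemma detR_in (R : realType) m n (M : 'M[int]_(m, n)) (HM : totally_unimodular M)
  k (f : 'I_k -> 'I_m) (g : 'I_k -> 'I_n) :
  \det (mxsub f g (Defs.realM R M)) \in [:: -1; 0; 1].
Proof.
rewrite /Defs.realM -map_mxsub.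
have -> : \det (map_mx (fun z : int => z%:~R) (mxsub f g M)) = ((\det (mxsub f g M))%:~R : R).
  exact: det_map_mx.
move: (HM k f g); rewrite !inE => /or3P[]/eqP->.
- by rewrite eqxx.
- by rewrite eqxx orbT.
- by rewrite eqxx !orbT.
Qed.

Lemma set3N (R : realType) (a : R) : a \in [:: -1; 0; 1] -> - a \in [:: -1; 0; 1].
Proof.
rewrite !inE => /or3P[]/eqP->; rewrite ?opprK ?oppr0 ?eqxx ?orbT //.
Qed.
Lemma set3M (R : realType) (a b : R) : a \in [:: -1; 0; 1] -> b \in [:: -1; 0; 1] ->
  a * b \in [:: -1; 0; 1].
Proof.
rewrite !inE => /or3P[]/eqP-> /or3P[]/eqP->;
 rewrite ?mulr0 ?mul0r ?mulr1 ?mul1r ?mulrNN ?mulN1r ?opprK ?eqxx ?orbT //.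
by rewrite mulr1 eqxx !orbT.
Qed.

Lemma partA (R : realType) m n (M : 'M[int]_(m, n)) (HM : totally_unimodular M)
  (y : 'cV[R]_n) (ker : Defs.realM R M *m y = 0)
  (P : forall w : 'cV[R]_n, Defs.realM R M *m w = 0 ->
        (forall e, y e 0 = 0 -> w e 0 = 0) -> exists t, w = t *: y)
  (e0 : 'I_n) (ye0 : y e0 0 != 0) (e : 'I_n) : y e 0 / y e0 0 \in [:: -1; 0; 1].
Proof.
set MR := Defs.realM R M.
case: (eqVneq (y e 0) 0) => [->|ye]; first by rewrite mul0r !inE eqxx orbT.
case: (eqVneq e e0) => [->|ne]; first by rewrite divff // !inE eqxx !orbT.
pose S := [set e | (y e 0 != 0) && (e != e0)].
have eS : e \in S by rewrite inE ye ne.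
pose k := #|S|.
pose g (j : 'I_k) : 'I_n := enum_val j.
have gS j : g j \in S := enum_valP j.
have ginj : injective g := @enum_val_inj _ (mem S).
pose A : 'M[R]_(m, k) := colsub g MR.
have Aind : forall a : 'cV[R]_k, A *m a = 0 -> a = 0.
  move=> a Aa.
  pose w : 'cV[R]_n := \col_e (\sum_(j | g j == e) a j 0).
  have Mw : MR *m w = 0.
    have wE e1 j1 : w e1 j1 = \sum_(j | g j == e1) a j 0 by rewrite mxE.
    apply/matrixP => i j.
    transitivity ((A *m a) i j); last by rewrite Aa.
    rewrite !mxE.
    under eq_bigr do rewrite wE mulr_sumr.
    have -> : j = 0 := ord1 j.
    under eq_bigr do rewrite big_mkcond.
    rewrite exchange_big /=; apply: eq_bigr => j' _.
    rewrite -big_mkcond /= (big_pred1 (g j')) ?mxE // => x; exact: eq_sym.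
  have wsupp : forall e, y e 0 = 0 -> w e 0 = 0.
    move=> e1 ye1; rewrite mxE big1 // => j /eqP gj.
    by move: (gS j); rewrite gj inE ye1 eqxx.
  have [t wt] := P w Mw wsupp.
  have we0 : w e0 0 = 0.
    rewrite mxE big1 // => j /eqP gj.
    by move: (gS j); rewrite gj inE eqxx andbF.
  have t0 : t = 0.
    by move: we0; rewrite wt mxE => /eqP; rewrite mulf_eq0 (negbTE ye0) orbF => /eqP.
  apply/matrixP => j i; rewrite (ord1 i) mxE.
  have := congr1 (fun X : 'cV[R]_n => X (g j) 0) wt; rewrite t0 scale0r !mxE.
  by rewrite (big_pred1 j) // => x; apply/eqP/eqP => [/ginj|->].
have rf : row_full A.
  rewrite /row_full -mxrank_tr; apply: inj_row_free => v vA.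
  have := Aind v^T; rewrite -{1}(trmxK A) -trmx_mul vA trmx0 => /(_ erefl).
  by move=> /(congr1 trmx); rewrite trmxK trmx0.
pose f := fullrankfun rf.
pose B := rowsub f A.
have Bu : B \in unitmx := fullrowsub_unit rf.
pose v : 'cV[R]_k := \col_j y (g j) 0.
pose c : 'cV[R]_k := \col_i (- (y e0 0 * MR (f i) e0)).
have Bv : B *m v = c.
  apply/matrixP => i j; rewrite (ord1 j) !mxE.
  have := congr1 (fun X : 'M[R]_(m,1) => X (f i) 0) ker; rewrite !mxE.
  rewrite (bigID (mem S)) /= big_enum_val /= (bigD1 e0) /=; last by rewrite inE eqxx andbF.
  rewrite [X in _ + (_ + X)]big1 ?addr0; last first.
    move=> e1 /andP[]; rewrite inE negb_and negbK => /orP[/eqP->|]; first by rewrite mulr0.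
    by rewrite negbK => ->.
  move=> /eqP; rewrite addrC addr_eq0 => /eqP H.
  have -> : - (y e0 0 * (M (f i) e0)%:~R) = - (Defs.realM R M (f i) e0 * y e0 0).
    by rewrite mulrC /Defs.realM mxE.
  by rewrite H opprK; apply: eq_bigr => j' _; rewrite !mxE.
have vE : v = invmx B *m c by rewrite -Bv mulKmx.
pose j0 := enum_rank_in eS e.
have gj0 : g j0 = e by rewrite /g /j0 enum_rankK_in.
pose gj (i : 'I_k) : 'I_n := if i == j0 then e0 else g i.
pose Bj := mxsub f gj MR.
have detBj : \det Bj = \sum_i MR (f i) e0 * cofactor B i j0.
  rewrite (expand_det_col _ j0); apply: eq_bigr => i _.
  rewrite mxE /gj eqxx; congr (_ * _); rewrite /cofactor; congr (_ * \det _).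
  apply/matrixP => a b; rewrite !mxE.
  by rewrite /gj eq_sym (negbTE (neq_lift _ _)).
have vj0 : v j0 0 = (\det B)^-1 * (- (y e0 0 * \det Bj)).
  rewrite vE /invmx Bu -scalemxAl mxE mxE detBj.
  congr (_ * _); rewrite mulr_sumr -sumrN; apply: eq_bigr => i _; rewrite /c !mxE.
  by rewrite mulrN mulrC mulrA.
have dB0 : \det B != 0 by rewrite -unitfE -unitmxE.
have dBin : \det B \in [:: -1; 0; 1].
  have -> : B = mxsub f g MR by apply/matrixP => a b; rewrite !mxE.
  exact: detR_in.
have dBjin : \det Bj \in [:: -1; 0; 1] by apply: detR_in.
have -> : y e 0 / y e0 0 = - (\det Bj * (\det B)^-1).
  move: vj0; rewrite mxE gj0 => ->.
  by field; apply/andP; split.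
apply: set3N; apply: set3M => //.
move: dBin dB0; rewrite !inE => /or3P[]/eqP->; rewrite ?eqxx //.
  by rewrite invrN invr1 eqxx.
by rewrite invr1 eqxx !orbT.
Qed.
Lemma pos_trans (R : realType) (a b c : R) : 0 < a * b -> 0 < b * c -> 0 < a * c.
Proof.
have [b0|b0|->] := ltrgtP b 0; last by rewrite mulr0 ltxx.
- rewrite (nmulr_lgt0 _ b0) (nmulr_rgt0 _ b0) => a0 c0.
  by rewrite (nmulr_rgt0 _ a0).
- rewrite (pmulr_lgt0 _ b0) (pmulr_rgt0 _ b0) => a0 c0.
  by rewrite mulr_gt0.

Qed.

Lemma sq_pos (R : realType) (a : R) : a != 0 -> 0 < a * a.
Proof. by move=> a0; rewrite -expr2 exprn_even_gt0. Qed.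

Definition suppR (R : realType) n (v : 'cV[R]_n) : {set 'I_n} := [set e | v e 0 != 0].
Arguments suppR {R n}.

Lemma partB (R : realType) m n (MR : 'M[R]_(m, n)) (N : nat) :
  forall y0 : 'cV[R]_n, (#|suppR y0| <= N)%N -> y0 != 0 -> MR *m y0 = 0 ->
  exists y : 'cV[R]_n, [/\ y != 0, MR *m y = 0,
    (forall e, y e 0 != 0 -> 0 < y e 0 * y0 e 0) &
    (forall w, MR *m w = 0 -> (forall e, y e 0 = 0 -> w e 0 = 0) -> exists t, w = t *: y)].
Proof.
elim: N => [|N IH] y0 Hs y00 My0.
  exfalso; move: y00 => /negP; apply; apply/eqP/matrixP => e j; rewrite (ord1 j) mxE.
  have : e \notin suppR y0 by by move: Hs; rewrite leqn0 => /eqP/card0_eq ->.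
  by rewrite inE negbK => /eqP.
case: (classic (forall w, MR *m w = 0 -> (forall e, y0 e 0 = 0 -> w e 0 = 0) ->
                  exists t, w = t *: y0)) => [HP|HnP].
  exists y0; split => // e ye; exact: sq_pos.
have [w [Mw [wsupp wnot]]] : exists w, MR *m w = 0 /\ (forall e, y0 e 0 = 0 -> w e 0 = 0)
    /\ forall t, w <> t *: y0.
  apply: NNPP => H; apply: HnP => w Mw ws; apply: NNPP => H2; apply: H.
  exists w; split => //; split => // t wt; apply: H2; by exists t.
have [e1 we1] : exists e1, w e1 0 != 0.
  apply: NNPP => H; apply: (wnot 0); rewrite scale0r; apply/matrixP => e j.
  rewrite (ord1 j) mxE; apply: NNPP => H2; apply: H; exists e; exact/eqP.
have ye1 : y0 e1 0 != 0 by apply/eqP => /wsupp /eqP; rewrite (negbTE we1).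
pose s : R := if 0 < w e1 0 * y0 e1 0 then 1 else -1.
have s2 : s * s = 1 by rewrite /s; case: ifP => _; rewrite ?mulr1 ?mulrNN ?mulr1.
pose w' := s *: w.
have w'E e : w' e 0 = s * w e 0 by rewrite mxE.
pose Q := fun e => 0 < w' e 0 * y0 e 0.
have Qe1 : Q e1.
  rewrite /Q w'E /s; case: ifP => [H|/negbT]; first by rewrite mul1r.
  rewrite -leNgt mulN1r mulNr oppr_gt0 => H.
  by rewrite lt_neqAle H mulf_neq0.
pose r := fun e => y0 e 0 / w' e 0.
have Qw e : Q e -> w' e 0 != 0 by rewrite /Q => H; apply/eqP => H2; move: H; rewrite H2 mul0r ltxx.
have rE e : Q e -> r e * w' e 0 = y0 e 0 by move=> /Qw H; rewrite /r mulfVK.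
case: (@arg_minP _ _ _ e1 Q r Qe1) => es Qes esmin.
pose t := r es.
have t0 : 0 < t.
  have := rE _ Qes; have := Qes; rewrite /Q -/t => H1 H2; nra.
have key e : t * (w' e 0 * y0 e 0) <= y0 e 0 * y0 e 0.
  case: (boolP (Q e)) => Qe.
    have H3 : t <= r e := esmin e Qe.
    apply: (@le_trans _ _ (r e * (w' e 0 * y0 e 0))); first by rewrite ler_pM2r.
    by rewrite mulrA rE.
  move: Qe; rewrite /Q -leNgt => H; nra.
pose u := y0 - t *: w'.
have uE e : u e 0 = y0 e 0 - t * w' e 0 by rewrite !mxE.
have Mu : MR *m u = 0 by rewrite mulmxBr -!scalemxAr Mw !scaler0 My0 subr0.
have uy e : u e 0 != 0 -> y0 e 0 != 0.
  move=> ue; apply/eqP => ye; move: ue; rewrite uE w'E ye (wsupp _ ye).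
  by rewrite !mulr0 subr0 eqxx.
have uconf e : u e 0 != 0 -> 0 < u e 0 * y0 e 0.
  move=> ue; rewrite lt0r mulf_neq0 ?uy //=; rewrite uE.
  have := key e; nra.
have ues : u es 0 = 0 by rewrite uE -(rE _ Qes) subrr.
have u0 : u != 0.
  apply/eqP => u0; apply: (wnot (t * s)^-1); apply/matrixP => e j; rewrite (ord1 j).
  rewrite [RHS]mxE.
  have ue0 : u e 0 = 0 by rewrite u0 mxE.
  move: ue0; rewrite uE => /eqP; rewrite subr_eq0 => /eqP ->.
  rewrite w'E; field; apply/andP; split; last by rewrite gt_eqF.
  by apply/eqP => s0; move: s2; rewrite s0 mul0r => /eqP; rewrite eq_sym oner_eq0.
have Hsu : (#|suppR u| <= N)%N.
  rewrite -ltnS; apply: leq_trans Hs; apply: proper_card; apply/properP; split.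
    by apply/subsetP => e; rewrite !inE => /uy.
  by exists es; rewrite !inE ?ues ?eqxx // -(rE _ Qes) mulf_neq0 // ?Qw // gt_eqF.
have [y [y0' My Hc HPy]] := IH u Hsu u0 Mu.
exists y; split => // e ye.
apply: (@pos_trans _ _ (u e 0)); first exact: Hc.
apply: uconf; apply/eqP => ue; move: (Hc e ye); by rewrite ue mulr0 ltxx.

Qed.

Lemma toR_eq0 (R : realType) n (z : 'cV[int]_n) : toR R z = 0 -> z = 0.
Proof.
move=> H; apply/matrixP => e j; rewrite mxE.
have := congr1 (fun X : 'cV[R]_n => X e j) H; rewrite !mxE => /eqP.
by rewrite intr_eq0 => /eqP.
Qed.

Lemma toR_mul (R : realType) m n (M : 'M[int]_(m, n)) (z : 'cV[int]_n) :
  Defs.realM R M *m toR R z = toR R (M *m z).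
Proof. by rewrite /Defs.realM /toR -map_mxM. Qed.

Lemma neq_helpers (R : realType) :
  [/\ ((-1 : R) == 1) = false, ((0:R) == 1) = false & ((0:R) == -1) = false].
Proof. by split; apply/negbTE/eqP => h; lra. Qed.

Lemma partC (R : realType) m n (M : 'M[int]_(m, n)) (HM : totally_unimodular M)
  (z : 'cV[int]_n) (zL : inLambda M z) (z0 : z != 0) :
  exists g : 'cV[int]_n, [/\ inLambda M g, g != 0, (forall e, g e 0 \in [:: -1; 0; 1]) &
     (forall e, g e 0 != 0 -> 0 < g e 0 * z e 0)].
Proof.
pose y0 := toR R z.
have y00 : y0 != 0 by apply/eqP => /toR_eq0 H; move: z0; rewrite H eqxx.
have My0 : Defs.realM R M *m y0 = 0 by rewrite toR_mul zL /toR map_mx0.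
have [y [y0' My Hc HPy]] := @partB R _ _ (Defs.realM R M) _ y0 (leqnn _) y00 My0.
have [e0 ye0] : exists e0, y e0 0 != 0.
  apply: NNPP => H; move: y0' => /negP; apply; apply/eqP/matrixP => e j.
  rewrite (ord1 j) mxE; apply: NNPP => H2; apply: H; exists e; exact/eqP.
have Hq := @partA R _ _ M HM y My HPy e0 ye0.
pose s : R := `|y e0 0|.
have s0 : 0 < s by rewrite normr_gt0.
pose q e := y e 0 / s.
have qin e : q e \in [:: -1; 0; 1].
  rewrite /q /s; have [yp|yn] := ger0P (y e0 0); first exact: Hq.
  by rewrite invrN mulrN; apply: set3N; apply: Hq.
pose g : 'cV[int]_n := \col_e (if q e == 1 then 1 else if q e == -1 then -1 else 0).
have gE e : ((g e 0)%:~R : R) = q e.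
  have [m1 z1 z2] := neq_helpers R.
  rewrite mxE; move: (qin e); rewrite !inE => /or3P[]/eqP->.
  - by rewrite m1 eqxx rmorphN1.
  - by rewrite z1 z2.
  - by rewrite eqxx.
have gR : toR R g = s^-1 *: y.
  apply/matrixP => e j; have -> : j = 0 := ord1 j.
  by rewrite [LHS]mxE gE [RHS]mxE /q mulrC.
exists g; split.
- apply: (@toR_eq0 R); rewrite -toR_mul gR -scalemxAr My scaler0 //.
- apply/eqP => g0; have := gE e0; rewrite g0 mxE /q => /esym /eqP.
  by rewrite mulf_eq0 invr_eq0 (negbTE ye0) gt_eqF.
- move=> e; rewrite mxE.
  by case: ifP => _; last case: ifP => _; rewrite !inE eqxx ?orbT.
- move=> e ge; rewrite -(ltr0z R) rmorphM /= gE.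
  have qe : q e != 0 by rewrite -gE intr_eq0.
  have ye : y e 0 != 0 by move: qe; rewrite /q mulf_eq0 negb_or => /andP[].
  have := Hc e ye; rewrite /y0 /toR mxE /q.
  by move=> H; rewrite mulrAC divr_gt0.
Qed.

Definition L1 n (z : 'cV[int]_n) : nat := (\sum_(e < n) absz (z e 0%R))%N.
Arguments L1 {n}.

Lemma absz_split (z g : int) : g \in [:: -1; 0; 1] -> (g != 0 -> 0 < g * z) ->
  (absz z = absz (z - g) + absz g)%N.
Proof.
rewrite !inE => /or3P[]/eqP-> H; try lia.
Qed.

Lemma dot_ge0 (R : realType) n (v : 'cV[R]_n) : 0 <= dotR v v.
Proof. by apply: sumr_ge0 => i _; rewrite -expr2 sqr_ge0. Qed.

Lemma dotBB (R : realType) n (x v : 'cV[R]_n) :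
  dotR (x - v) (x - v) = dotR x x - 2 * dotR x v + dotR v v.
Proof.
rewrite /dotR.
transitivity (\sum_(i < n) (x i 0 * x i 0 - 2 * (x i 0 * v i 0) + v i 0 * v i 0)).
  by apply: eq_bigr => i _; rewrite !mxE; ring.
by rewrite big_split sumrB mulr_sumr.
Qed.

Lemma dot_toRB (R : realType) n (x : 'cV[R]_n) (a b : 'cV[int]_n) :
  dotR x (toR R (a - b)) = dotR x (toR R a) - dotR x (toR R b).
Proof.
rewrite /dotR -sumrB; apply: eq_bigr => i _; rewrite !mxE rmorphB /=; ring.
Qed.

Lemma dot_toRD (R : realType) n (x : 'cV[R]_n) (a b : 'cV[int]_n) :
  dotR x (toR R (a + b)) = dotR x (toR R a) + dotR x (toR R b).
Proof.
rewrite /dotR -big_split; apply: eq_bigr => i _; rewrite !mxE rmorphD /=; ring.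
Qed.

Lemma dot_euler (R : realType) n (g : 'cV[int]_n) :
  (forall e, g e 0 \in [:: -1; 0; 1]) ->
  dotR (toR R g) (toR R g) = (L1 g)%:R.
Proof.
move=> Hg; rewrite /dotR /L1 natr_sum; apply: eq_bigr => i _; rewrite !mxE.
move: (Hg i); rewrite !inE => /or3P[]/eqP->; rewrite ?mulr0 ?mul0r //.
all: by rewrite -intrM.
Qed.

Lemma vor_aux (R : realType) (a b c : R) : a <= a - 2 * b + c -> 2 * b <= c.
Proof. move=> H; lra. Qed.

Lemma partD (R : realType) m n (M : 'M[int]_(m, n)) (HM : totally_unimodular M)
  (x : 'cV[R]_n) (Hx : inV0 M x) (N : nat) :
  forall z : 'cV[int]_n, (L1 z <= N)%N -> inLambda M z ->
  2 * dotR x (toR R z) <= (L1 z)%:R.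
Proof.
elim: N => [|N IH] z Hz zL.
  have z0 : z = 0.
    apply/matrixP => e j; have -> : j = 0 := ord1 j.
    rewrite mxE; apply/eqP; rewrite -absz_eq0 -leqn0.
    apply: leq_trans Hz; by rewrite /L1 (bigD1 e) //= leq_addr.
  rewrite z0 /dotR big1 ?mulr0 // => i _; rewrite !mxE mulr0 //.
case: (eqVneq z 0) => [->|z0].
  rewrite /dotR big1 ?mulr0 // => i _; rewrite !mxE mulr0 //.
have [g [gL g0 gin gc]] := @partC R _ _ M HM z zL z0.
have Hsplit e : absz (z e 0) = (absz ((z - g)%R e 0%R) + absz (g e 0%R))%N.
  by rewrite !mxE; apply: (@absz_split _ _ (gin e) (gc e)).
have Lsplit : L1 z = (L1 (z - g) + L1 g)%N.
  by rewrite /L1 -big_split; apply: eq_bigr => e _; apply: Hsplit.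
have Lg : (0 < L1 g)%N.
  have [e ge] : exists e, g e 0 != 0.
    apply: NNPP => H; move: g0 => /negP; apply; apply/eqP/matrixP => e j.
    rewrite (ord1 j) mxE; apply: NNPP => H2; apply: H; exists e; exact/eqP.
  by rewrite /L1 (bigD1 e) //= addn_gt0 lt0n absz_eq0 ge.
have zgL : inLambda M (z - g) by rewrite /inLambda mulmxBr zL gL subr0.
have IHz := IH (z - g) _ zgL.
have Hvor : 2 * dotR x (toR R g) <= (L1 g)%:R.
  have := Hx.2 g gL; rewrite /normR ler_sqrt ?dot_ge0 // dotBB -(@dot_euler R _ g gin).
  exact: vor_aux.
rewrite Lsplit natrD -[z in dotR _ (toR R z)](subrK g) dot_toRD mulrDr.
apply: lerD => //; apply: IHz.
by rewrite -ltnS; apply: leq_trans Hz; rewrite Lsplit -addn1 leq_add2l.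
Qed.

Lemma triangle_strict (a b : int) : a \in [:: -1; 0; 1] -> b \in [:: -1; 0; 1] ->
  a * b < 0 -> (absz (a + b)%R < absz a + absz b)%N.
Proof. rewrite !inE => /or3P[]/eqP-> /or3P[]/eqP-> //. Qed.

Theorem mainTheorem12 (R : realType) (m n : nat) (M : 'M[int]_(m, n))
  (HM : totally_unimodular M) (lam mu : 'cV[int]_n)
  (Hlam : inXi R M lam) (Hmu : inXi R M mu)
  (Hne : exists x : 'cV[R]_n, inV0 M x /\ inFgamma M lam x /\ inFgamma M mu x) :
  forall e : 'I_n, 0 <= lam e 0 * mu e 0.
Proof.
move=> e; case: Hne => x [Hx [[_ Hl] [_ Hm]]].
case: Hlam => [[lamL [_ lamin]] _]; case: Hmu => [[muL [_ muin]] _].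
have zL : inLambda M (lam + mu) by rewrite /inLambda mulmxDr lamL muL addr0.
have Hz := @partD R _ _ M HM x Hx _ (lam + mu) (leqnn _) zL.
rewrite dot_toRD mulrDr Hl Hm /normR !sqr_sqrtr ?dot_ge0 // !dot_euler // in Hz.
rewrite -natrD ler_nat in Hz.
rewrite leNgt; apply/negP => Hneg.
have := @triangle_strict _ _ (lamin e) (muin e) Hneg.
move: Hz; rewrite /L1 -big_split /= (bigD1 e) //= [X in (_ <= X)%N](bigD1 e) //=.
rewrite [in X in (_ <= X)%N]mxE => H1 H2.
have H3 : (\sum_(i < n | i != e) absz ((lam + mu)%R i 0%R) <=
           \sum_(i < n | i != e) (absz (lam i 0%R) + absz (mu i 0%R)))%N.
  apply: leq_sum => i _; rewrite mxE.
  by move: (lamin i) (muin i); rewrite !inE => /or3P[]/eqP-> /or3P[]/eqP->.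
have H4 := leq_trans (leq_add H2 H3) H1.
by rewrite addSn ltnn in H4.
Qed.
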